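(* There exists a unique $\tau_c\in(\tau_1^i,+\infty)$ such that $$p'(\tau_1^i)=\frac{2h(\tau_c)-2h(\tau_1^i)}{\tau_c^2-(\tau_1^i)^2}<p'(\tau_c).$$ Moreover, $\tau_c>\tau_2^a$ and $$p'(\tau_1^i)>\frac{2h(\tau)-2h(\tau_1^i)}{\tau^2-(\tau_1^i)^2}\quad\text{for all }\tau\in(\tau_1^i,\tau_c).$$
   Context: The pressure is $p(\tau)=\frac{\mathcal S}{(\tau-1)^\gamma}-\frac{1}{\tau^2}$ for $\tau>1$, with constants $1<\gamma<2$ and $\mathcal S>0$, assumed such that there exist $1<\tau_1^i<\tau_2^i$ with $p'(\tau)<0$ for $\tau>1$, $p''>0$ on $(1,\tau_1^i)\cup(\tau_2^i,+\infty)$, and $p''<0$ on $(\tau_1^i,\tau_2^i)$. The function $h$ (specific enthalpy) satisfies $h'(\tau)=\tau p'(\tau)$. $\tau_2^a>\tau_2^i$ denotes the point with $p'(\tau_2^a)=p'(\tau_1^i)$. *)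

(* Defs.v *)
From Stdlib Require Import Reals.
From Coquelicot Require Import Coquelicot.
Open Scope R_scope.

(* The pressure p(tau) = S / (tau - 1)^gamma - 1 / tau^2  (meaningful for tau > 1). *)
Definition pres (S gam : R) (tau : R) : R :=
  S / Rpower (tau - 1) gam - 1 / tau ^ 2.

Definition dpres (S gam : R) : R -> R := Derive (pres S gam).
Definition ddpres (S gam : R) : R -> R := Derive (dpres S gam).

Definition chord (h : R -> R) (t1 tau : R) : R :=
  (2 * h tau - 2 * h t1) / (tau ^ 2 - t1 ^ 2).

(* Main.v *)
Require Import Defs.
From Stdlib Require Import Reals Lra.
From Coquelicot Require Import Coquelicot.
Open Scope R_scope.

Definition dp (S gam x : R) : R :=
  - S*gam/((x-1)*exp (gam * ln (x - 1))) + 2 / x^3.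

Lemma loc_gt1 (x : R) : 1 < x -> locally x (fun t => 1 < t).
Proof.
  intros Hx. assert (He : 0 < x - 1) by lra.
  exists (mkposreal _ He). intros y Hy.
  change (Rabs (y - x) < x - 1) in Hy.
  apply Rabs_lt_between' in Hy. lra.
Qed.

Lemma pres_deriv S gam x : 1 < x -> is_derive (pres S gam) x (dp S gam x).
Proof.
  intros Hx. unfold pres, Rpower, dp.
  assert (E : exp (gam * ln (x - 1)) > 0) by apply exp_pos.
  auto_derive.
  - repeat split; try lra.
    + apply Rgt_not_eq. replace (x + - (1)) with (x - 1) by ring. exact E.
    + apply Rgt_not_eq. assert (0 < x) by lra. nra.
  - replace (x + - (1)) with (x - 1) by ring. field.
    repeat split; try lra; try (apply Rgt_not_eq; exact E).
Qed.

Lemma dpres_eq S gam x : 1 < x -> dpres S gam x = dp S gam x.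
Proof. intros Hx. unfold dpres. apply is_derive_unique, pres_deriv, Hx. Qed.

Lemma dpres_deriv S gam x : 1 < x -> is_derive (dpres S gam) x (ddpres S gam x).
Proof.
  intros Hx. unfold ddpres. apply Derive_correct.
  assert (Hd : ex_derive (dp S gam) x).
  { unfold dp. assert (E : exp (gam * ln (x - 1)) > 0) by apply exp_pos.
    auto_derive. repeat split; try lra.
    - replace (x + - (1)) with (x - 1) by ring. apply Rgt_not_eq.
      apply Rmult_gt_0_compat; lra.
    - apply Rgt_not_eq. assert (0 < x) by lra.
      apply Rmult_gt_0_compat; [lra|]. apply Rmult_gt_0_compat; lra. }
  destruct Hd as [l Hl]. exists l.
  apply is_derive_ext_loc with (dp S gam); [|exact Hl].
  apply filter_imp with (2 := loc_gt1 x Hx). intros t Ht. symmetry. now apply dpres_eq.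
Qed.

Lemma dec_mvt (F F' : R -> R) a b : a < b ->
  (forall c, a <= c <= b -> is_derive F c (F' c)) ->
  (forall c, a < c < b -> F' c < 0) -> F b < F a.
Proof.
  intros Hab HD Hn.
  destruct (MVT_cor2 F F' a b Hab) as [c [Hc1 Hc2]].
  { intros c Hc. apply is_derive_Reals, HD, Hc. }
  specialize (Hn c Hc2). nra.
Qed.

Lemma inc_mvt (F F' : R -> R) a b : a < b ->
  (forall c, a <= c <= b -> is_derive F c (F' c)) ->
  (forall c, a < c < b -> 0 < F' c) -> F a < F b.
Proof.
  intros Hab HD Hn.
  destruct (MVT_cor2 F F' a b Hab) as [c [Hc1 Hc2]].
  { intros c Hc. apply is_derive_Reals, HD, Hc. }
  specialize (Hn c Hc2). nra.
Qed.

Theorem proposition3p1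
  (S gam t1i t2i t2a : R) (h : R -> R)
  (HS : 0 < S) (Hgam : 1 < gam < 2)
  (Ht : 1 < t1i < t2i)
  (Hp1 : forall tau, 1 < tau -> dpres S gam tau < 0)
  (Hp2a : forall tau, 1 < tau < t1i -> 0 < ddpres S gam tau)
  (Hp2b : forall tau, t2i < tau -> 0 < ddpres S gam tau)
  (Hp2c : forall tau, t1i < tau < t2i -> ddpres S gam tau < 0)
  (Hh : forall tau, 1 < tau -> is_derive h tau (tau * dpres S gam tau))
  (Ht2a : t2i < t2a) (Hp2a_eq : dpres S gam t2a = dpres S gam t1i) :
  exists tc : R,
    (t1i < tc /\ dpres S gam t1i = chord h t1i tc /\ chord h t1i tc < dpres S gam tc) /\
    (forall t, t1i < t ->
       dpres S gam t1i = chord h t1i t -> chord h t1i t < dpres S gam t -> t = tc) /\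
    t2a < tc /\
    (forall tau, t1i < tau < tc -> dpres S gam t1i > chord h t1i tau).
Proof.
  set (f := dpres S gam).
  set (t1 := t1i).
  assert (Df : forall x, 1 < x -> is_derive f x (ddpres S gam x)) by (intros; now apply dpres_deriv).
  assert (B : forall tau, t1 < tau < t2a -> f tau < f t1).
  { intros tau Htau. destruct (Rle_or_lt tau t2i) as [Hle|Hlt].
    - apply (dec_mvt f (ddpres S gam)); [lra| |].
      + intros c Hc. apply Df. unfold t1 in *; lra.
      + intros c Hc. apply Hp2c. unfold t1 in *; lra.
    - unfold f, t1. rewrite <- Hp2a_eq.
      apply (inc_mvt _ (ddpres S gam)); [lra| |].
      + intros c Hc. apply Df. lra.
      + intros c Hc. apply Hp2b. lra. }
  assert (C : forall tau, t2a < tau -> f t1 < f tau).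
  { intros tau Htau. unfold f, t1. rewrite <- Hp2a_eq.
    apply (inc_mvt _ (ddpres S gam)); [lra| |].
    + intros c Hc. apply Df. lra.
    + intros c Hc. apply Hp2b. lra. }
  set (g := fun t => 2*h t - 2*h t1 - f t1*(t^2-t1^2)).
  assert (Dg : forall x, 1 < x -> is_derive g x (2*x*(f x - f t1))).
  { intros x Hx. unfold g. pose proof (Hh x Hx) as Hhx.
    auto_derive.
    - exists (x * dpres S gam x). exact Hhx.
    - replace (Derive (fun x0 : R => h x0) x) with (x * dpres S gam x) by (symmetry; apply is_derive_unique; exact Hhx). unfold f. ring. }
  assert (g1 : g t1 = 0) by (unfold g; ring).
  assert (G1 : forall tau, t1 < tau <= t2a -> g tau < 0).
  { intros tau Htau. rewrite <- g1.
    apply (dec_mvt g (fun x => 2*x*(f x - f t1))); [lra| |].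
    - intros c Hc. apply Dg. unfold t1 in *; lra.
    - intros c Hc. assert (f c < f t1) by (apply B; lra).
      assert (0 < c) by (unfold t1 in *; lra). nra. }
  assert (G2 : forall a b, t2a <= a < b -> g a < g b).
  { intros a b Hab.
    apply (inc_mvt g (fun x => 2*x*(f x - f t1))); [lra| |].
    - intros c Hc. apply Dg. lra.
    - intros c Hc. assert (f t1 < f c) by (apply C; lra).
      assert (0 < c) by lra. nra. }
  assert (Hc0 : 0 < - f t1) by (apply Ropp_0_gt_lt_contravar, Hp1; unfold t1; lra).
  set (c := - f t1) in *.
  set (M := Rmax (Rmax t2a 2) (1 + 2*S*gam/c)).
  assert (HM1 : t2a <= M /\ 2 <= M /\ 1 + 2*S*gam/c <= M).
  { unfold M. repeat split;
    [eapply Rle_trans; [apply Rmax_l|]; apply Rmax_l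
    |eapply Rle_trans; [apply Rmax_r|]; apply Rmax_l
    |apply Rmax_r]. }
  assert (HfM : - c / 2 <= f M).
  { unfold f. rewrite dpres_eq by lra. unfold dp.
    set (u := M - 1). set (E := exp (gam * ln u)).
    assert (HE : 1 <= E).
    { unfold E. assert (0 <= gam * ln u).
      { apply Rmult_le_pos; [lra|]. rewrite <- ln_1. apply ln_le; unfold u; lra. }
      pose proof (exp_ineq1_le (gam * ln u)). lra. }
    assert (Hu : 2*S*gam/c <= u) by (unfold u; lra).
    assert (Hu' : 2*S*gam <= c * u).
    { apply (Rmult_le_compat_l c) in Hu; [|lra].
      replace (c * (2*S*gam/c)) with (2*S*gam) in Hu by (field; lra). exact Hu. }
    assert (Hcu : 2*S*gam <= c * (u * E)).
    { assert (0 < u) by (unfold u; lra).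
      assert (0 <= c*u*(E-1)) by (apply Rmult_le_pos; [apply Rmult_le_pos|]; lra).
      lra. }
    assert (HuE : 0 < u * E).
    { assert (0 < u) by (unfold u; lra). apply Rmult_lt_0_compat; lra. }
    assert (H3 : 0 < 2 / M^3).
    { apply Rdiv_lt_0_compat; [lra|]. apply pow_lt; lra. }
    assert (H4 : S * gam / (u * E) <= c / 2).
    { apply (Rmult_le_reg_r (u*E)); [exact HuE|].
      replace (S * gam / (u * E) * (u * E)) with (S*gam) by (field; split; apply Rgt_not_eq; unfold u in *; lra).
      replace (c / 2 * (u * E)) with ((c * (u * E)) / 2) by field. lra. }
    replace (- S * gam / (u * E)) with (- (S * gam / (u * E))) by (field; split; apply Rgt_not_eq; unfold u in *; lra).
    lra. }
  assert (HfX : forall x, M <= x -> c / 2 <= f x - f t1).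
  { intros x Hx. destruct (Rle_lt_or_eq_dec M x Hx) as [Hlt|Heq].
    - assert (f M < f x).
      { apply (inc_mvt _ (ddpres S gam)); [lra| |].
        + intros c' Hc'. apply Df. lra.
        + intros c' Hc'. apply Hp2b. lra. }
      unfold c in *. lra.
    - subst x. unfold c in *. lra. }
  set (T := M + (Rabs (g M) + 1) / c).
  assert (HT : M < T).
  { unfold T. assert (0 < (Rabs (g M) + 1) / c).
    { apply Rdiv_lt_0_compat; [pose proof (Rabs_pos (g M)); lra | lra]. }
    lra. }
  assert (HgT : 0 < g T).
  { destruct (MVT_cor2 g (fun x => 2*x*(f x - f t1)) M T HT) as [xi [Hxi1 Hxi2]].
    { intros y Hy. apply is_derive_Reals, Dg. lra. }
    assert (Hd : c / 2 <= f xi - f t1) by (apply HfX; lra).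
    assert (Hk : c * (T - M) = Rabs (g M) + 1) by (unfold T; field; lra).
    assert (c <= 2 * xi * (f xi - f t1)) by nra.
    assert (c * (T - M) <= 2 * xi * (f xi - f t1) * (T - M)) by nra.
    pose proof (Rle_abs (- g M)). rewrite Rabs_Ropp in *. lra. }
  assert (Hgt2a : g t2a < 0) by (apply G1; unfold t1; lra).
  destruct (Ranalysis5.IVT_interv g t2a T) as [tc [Htc Hgtc]].
  { intros a Ha. apply derivable_continuous_pt.
    exists (2*a*(f a - f t1)). apply is_derive_Reals, Dg. lra. }
  { lra. } { exact Hgt2a. } { exact HgT. }
  assert (Htc2 : t2a < tc).
  { destruct (Rle_lt_or_eq_dec _ _ (proj1 Htc)) as [H|H]; [exact H|].
    subst tc. lra. }
  assert (chord_eq : forall t, t1 < t -> chord h t1 t = f t1 + g t / (t^2 - t1^2)).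
  { intros t Ht'. unfold chord, g.
    assert (0 < t^2 - t1^2) by (unfold t1 in *; nra). field. lra. }
  assert (Dpos : forall t, t1 < t -> 0 < t^2 - t1^2) by (intros; unfold t1 in *; nra).
  assert (gneg : forall t, t1 < t < tc -> g t < 0).
  { intros t Ht'. destruct (Rle_or_lt t t2a).
    - apply G1; lra.
    - rewrite <- Hgtc. apply G2; lra. }
  exists tc. fold f t1. split; [|split; [|split]].
  - assert (t1 < tc) by (unfold t1 in *; lra).
    rewrite chord_eq by lra. rewrite Hgtc. unfold Rdiv. rewrite Rmult_0_l, Rplus_0_r.
    split; [lra|split; [reflexivity|]]. apply C; lra.
  - intros t Ht' Heq Hlt.
    rewrite chord_eq in Heq, Hlt by lra.
    assert (Hg0 : g t = 0).
    { assert (g t / (t^2 - t1^2) = 0) by lra.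
      specialize (Dpos t Ht').
      apply (Rmult_eq_reg_r (/ (t^2 - t1^2))).
      - rewrite Rmult_0_l. exact H.
      - apply Rinv_neq_0_compat. lra. }
    destruct (Rle_or_lt t t2a) as [Hle|Hgt].
    { assert (g t < 0) by (apply G1; lra). lra. }
    destruct (Rtotal_order t tc) as [H1|[H1|H1]]; [| exact H1 |].
    + assert (g t < g tc) by (apply G2; lra). lra.
    + assert (g tc < g t) by (apply G2; lra). lra.
  - exact Htc2.
  - intros tau Htau. rewrite chord_eq by lra.
    assert (0 < - g tau / (tau^2 - t1^2)).
    { apply Rdiv_lt_0_compat; [|apply Dpos; lra].
      assert (g tau < 0) by (apply gneg; lra). lra. }
    replace (- g tau / (tau ^ 2 - t1 ^ 2)) with (- (g tau / (tau ^ 2 - t1 ^ 2))) in H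
      by (field; specialize (Dpos tau ltac:(lra)); lra).
    lra.
Qed.
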